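(* Let $(X,d)$ be a complete Busemann convex geodesic metric space which is uniformly convex with a modulus of uniform convexity that is monotone or lower semicontinuous from the right. Let $(A,B)$ be a closed convex pair of subsets of $X$ with $B$ bounded, and let $T:A\cup B\to A\cup B$ be a noncyclic relatively nonexpansive mapping. Then there exists $(x,y)\in A\times B$ such that $x=Tx$, $y=Ty$ and $d(x,y)=\operatorname{dist}(A,B)$.
   Context: $\operatorname{dist}(A,B)=\inf\{d(x,y):x\in A,y\in B\}$. A geodesic space is one in which any two points are joined by a geodesic segment; a subset is convex if it contains every geodesic segment joining two of its points. $X$ is Busemann convex if for any geodesics $c_1:[0,l_1]\to X$, $c_2:[0,l_2]\to X$, $d(c_1(tl_1),c_2(tl_2))\le (1-t)d(c_1(0),c_2(0))+t\,d(c_1(l_1),c_2(l_2))$ for all $t\in[0,1]$. $X$ is uniformly convex if for every $r>0$ and $\varepsilon\in(0,2]$ there is $\delta\in(0,1]$ such that for all $a,x,y$ with $d(x,a)\le r$, $d(y,a)\le r$, $d(x,y)\ge\varepsilon r$, every midpoint $m$ of $x,y$ satisfies $d(m,a)\le(1-\delta)r$; a function $\delta(r,\varepsilon)$ providing such $\delta$ is a modulus of uniform convexity; it is monotone if it is decreasing in $r$ for each fixed $\varepsilon$, and lower semicontinuous from the right if it is lower semicontinuous from the right in $r$ for each fixed $\varepsilon$. $T$ is relatively nonexpansive if $d(Tx,Ty)\le d(x,y)$ for all $x\in A$, $y\in B$, and noncyclic if $T(A)\subseteq A$, $T(B)\subseteq B$. *)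

(* Defs.v *)
From Stdlib Require Import Reals.
Open Scope R_scope.

Definition is_metric {X : Type} (d : X -> X -> R) : Prop :=
  (forall x y, d x y = 0 <-> x = y) /\
  (forall x y, d x y = d y x) /\
  (forall x y z, d x z <= d x y + d y z).

Definition cauchy_seq {X : Type} (d : X -> X -> R) (u : nat -> X) : Prop :=
  forall e, 0 < e -> exists N, forall m n, (N <= m)%nat -> (N <= n)%nat -> d (u m) (u n) < e.

Definition converges_to {X : Type} (d : X -> X -> R) (u : nat -> X) (x : X) : Prop :=
  forall e, 0 < e -> exists N, forall n, (N <= n)%nat -> d (u n) x < e.

Definition complete_metric {X : Type} (d : X -> X -> R) : Prop :=
  forall u, cauchy_seq d u -> exists x, converges_to d u x.

(* closed subset (sequentially closed; equivalent to closed in a metric space) *)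
Definition seq_closed_set {X : Type} (d : X -> X -> R) (A : X -> Prop) : Prop :=
  forall u x, (forall n, A (u n)) -> converges_to d u x -> A x.

Definition metric_bounded {X : Type} (d : X -> X -> R) (A : X -> Prop) : Prop :=
  exists x0 r, forall x, A x -> d x x0 <= r.

(* c : [0,l] -> X is a is_geodesic (isometric embedding of [0,l]); c is
   given as a function on R whose values outside [0,l] are irrelevant *)
Definition is_geodesic {X : Type} (d : X -> X -> R) (c : R -> X) (l : R) : Prop :=
  0 <= l /\ forall s t, 0 <= s <= l -> 0 <= t <= l -> d (c s) (c t) = Rabs (s - t).

Definition geodesic_space {X : Type} (d : X -> X -> R) : Prop :=
  forall x y, exists c, is_geodesic d c (d x y) /\ c 0 = x /\ c (d x y) = y.

Definition geod_convex {X : Type} (d : X -> X -> R) (A : X -> Prop) : Prop :=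
  forall c l, is_geodesic d c l -> A (c 0) -> A (c l) ->
    forall t, 0 <= t <= l -> A (c t).

Definition busemann_convex {X : Type} (d : X -> X -> R) : Prop :=
  forall c1 l1 c2 l2, is_geodesic d c1 l1 -> is_geodesic d c2 l2 ->
    forall t, 0 <= t <= 1 ->
      d (c1 (t * l1)) (c2 (t * l2)) <= (1 - t) * d (c1 0) (c2 0) + t * d (c1 l1) (c2 l2).

Definition is_midpoint {X : Type} (d : X -> X -> R) (x y m : X) : Prop :=
  d x m = d x y / 2 /\ d m y = d x y / 2.

Definition modulus_uc {X : Type} (d : X -> X -> R) (delta : R -> R -> R) : Prop :=
  forall r eps, 0 < r -> 0 < eps <= 2 ->
    0 < delta r eps <= 1 /\
    forall a x y m, d x a <= r -> d y a <= r -> d x y >= eps * r ->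
      is_midpoint d x y m -> d m a <= (1 - delta r eps) * r.

Definition uniformly_convex {X : Type} (d : X -> X -> R) : Prop :=
  exists delta, modulus_uc d delta.

Definition modulus_monotone (delta : R -> R -> R) : Prop :=
  forall eps, 0 < eps <= 2 ->
    forall r1 r2, 0 < r1 -> r1 <= r2 -> delta r2 eps <= delta r1 eps.

Definition modulus_lsc_right (delta : R -> R -> R) : Prop :=
  forall eps, 0 < eps <= 2 -> forall r, 0 < r ->
    forall e, 0 < e -> exists h, 0 < h /\
      forall s, r <= s < r + h -> delta r eps - e < delta s eps.

Definition is_inf_of (E : R -> Prop) (m : R) : Prop :=
  (forall r, E r -> m <= r) /\ (forall b, (forall r, E r -> b <= r) -> b <= m).

Definition dist_set {X : Type} (d : X -> X -> R) (A B : X -> Prop) : R -> Prop :=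
  fun r => exists a b, A a /\ B b /\ r = d a b.

Definition set_dist_is {X : Type} (d : X -> X -> R) (A B : X -> Prop) (r : R) : Prop :=
  is_inf_of (dist_set d A B) r.

Definition relatively_nonexpansive {X : Type} (d : X -> X -> R) (A B : X -> Prop)
  (T : X -> X) : Prop :=
  forall x y, A x -> B y -> d (T x) (T y) <= d x y.

Definition noncyclic {X : Type} (A B : X -> Prop) (T : X -> X) : Prop :=
  (forall x, A x -> A (T x)) /\ (forall y, B y -> B (T y)).

(* Main.v *)
Require Import Defs.
From Stdlib Require Import Reals Lra Lia Psatz Classical ClassicalEpsilon.
Open Scope R_scope.

Lemma m_refl {X} (d : X -> X -> R) : is_metric d -> forall x, d x x = 0.
Proof. intros [H _] x. apply H; reflexivity. Qed.
Lemma m_sym {X} (d:X->X->R) : is_metric d -> forall x y, d x y = d y x.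
Proof. intros [_ [H _]]; auto. Qed.
Lemma m_tri {X} (d:X->X->R) : is_metric d -> forall x y z, d x z <= d x y + d y z.
Proof. intros [_ [_ H]]; auto. Qed.
Lemma m_pos {X} (d:X->X->R) : is_metric d -> forall x y, 0 <= d x y.
Proof. intros H x y. pose proof (m_tri d H x y x) as H0. rewrite (m_refl d H x) in H0.
  rewrite (m_sym d H y x) in H0. lra. Qed.
Lemma m_eq {X} (d:X->X->R) : is_metric d -> forall x y : X, d x y = 0 -> x = y.
Proof. intros [H _] x y; apply H. Qed.

Lemma inv_pos k : 0 < / (INR k + 1).
Proof. apply Rinv_0_lt_compat. pose proof (pos_INR k). lra. Qed.

Lemma inv_mono N j : (N <= j)%nat -> / (INR j + 1) <= / (INR N + 1).
Proof. intros H. apply Rinv_le_contravar. pose proof (pos_INR N); lra.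
  apply le_INR in H. lra. Qed.

Lemma small_inv t : 0 < t -> exists N, forall n, (N <= n)%nat -> / (INR n + 1) < t.
Proof. intros Ht. destruct (archimed_cor1 t Ht) as [N [H1 H2]]. exists N. intros n Hn.
  eapply Rle_lt_trans; [|exact H1]. apply Rinv_le_contravar. apply lt_0_INR; lia.
  apply le_INR in Hn. lra. Qed.

Lemma geod_const {X} (d:X->X->R) (p:X) : is_metric d -> is_geodesic d (fun _ => p) 0.
Proof. intros Hm. split; [lra|]. intros s t Hs Ht. rewrite (m_refl d Hm).
  replace s with 0 by lra. replace t with 0 by lra. rewrite Rminus_0_r, Rabs_R0. reflexivity. Qed.

Lemma ball_convex {X} (d:X->X->R) : is_metric d -> busemann_convex d ->
  forall c l p s t, is_geodesic d c l -> 0 <= t <= l ->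
  d (c 0) p <= s -> d (c l) p <= s -> d (c t) p <= s.
Proof.
  intros Hm Hb c l p s t Hc Ht H0 Hl.
  destruct (Req_dec l 0) as [E|E].
  - subst l. replace t with 0 by lra. exact H0.
  - assert (Hl0 : 0 < l) by (destruct Hc; lra).
    pose proof (Hb c l (fun _ => p) 0 Hc (geod_const d p Hm) (t / l)) as B.
    assert (Ht' : 0 <= t / l <= 1).
    { split. apply Rmult_le_pos; [lra| left; apply Rinv_0_lt_compat; lra].
      apply Rmult_le_reg_r with l; [lra|]. unfold Rdiv. rewrite Rmult_assoc, Rinv_l; lra. }
    specialize (B Ht'). replace (t / l * l) with t in B by (field; lra). simpl in B.
    nra.
Qed.

Lemma pair_convex {X} (d:X->X->R) : is_metric d -> busemann_convex d ->
  forall c l g l' s t, is_geodesic d c l -> is_geodesic d g l' -> 0 <= t <= l ->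
  d (g 0) (c 0) <= s -> d (g l') (c l) <= s -> exists t', 0 <= t' <= l' /\ d (g t') (c t) <= s.
Proof.
  intros Hm Hb c l g l' s t Hc Hg Ht H0 Hl.
  destruct (Req_dec l 0) as [E|E].
  - subst l. exists 0. destruct Hg. split; [lra|]. replace t with 0 by lra. exact H0.
  - assert (Hl0 : 0 < l) by (destruct Hc; lra).
    assert (Hl'0 : 0 <= l') by (destruct Hg; lra).
    pose proof (Hb g l' c l Hg Hc (t / l)) as B.
    assert (Ht' : 0 <= t / l <= 1).
    { split. apply Rmult_le_pos; [lra| left; apply Rinv_0_lt_compat; lra].
      apply Rmult_le_reg_r with l; [lra|]. unfold Rdiv. rewrite Rmult_assoc, Rinv_l; lra. }
    specialize (B Ht'). replace (t / l * l) with t in B by (field; lra).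
    exists (t / l * l'). split; [split; nra|]. nra.
Qed.

Lemma mid_exists {X} (d:X->X->R) (K0 : X -> Prop) : is_metric d -> geodesic_space d -> geod_convex d K0 ->
  forall x y, K0 x -> K0 y -> exists m, K0 m /\ is_midpoint d x y m.
Proof.
  intros Hm Hg Hv x y Hx Hy. destruct (Hg x y) as [c [Hc [H0 H1]]].
  pose proof (m_pos d Hm x y) as Hp.
  set (l := d x y) in *.
  exists (c (l / 2)). split.
  - apply (Hv c l Hc); [rewrite H0; auto | rewrite H1; auto | lra].
  - destruct Hc as [_ Hc]. unfold is_midpoint. fold l.
    assert (E1 : d (c 0) (c (l/2)) = l/2).
    { rewrite Hc by lra. rewrite Rabs_left1 by lra. lra. }
    assert (E2 : d (c (l/2)) (c l) = l/2).
    { rewrite Hc by lra. rewrite Rabs_left1 by lra. lra. }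
    rewrite H0 in E1. rewrite H1 in E2. auto.
Qed.

Definition UCP {X} (d:X->X->R) : Prop := forall r0 Dd, 0 < r0 -> 0 < Dd -> Dd <= 2*r0 ->
  exists R s', r0 < R /\ s' < r0 /\ forall a x y m, d x a <= R -> d y a <= R -> Dd <= d x y ->
    is_midpoint d x y m -> d m a <= s'.

Lemma DL {X} (d:X->X->R) delta : modulus_uc d delta ->
  (modulus_monotone delta \/ modulus_lsc_right delta) ->
  forall r eps, 0 < r -> 0 < eps <= 2 ->
  exists h d0, 0 < h /\ 0 < d0 /\ forall R, r <= R <= r + h -> d0 <= delta R eps.
Proof.
  intros Hmod [Hmon|Hlsc] r eps Hr He.
  - exists 1, (delta (r+1) eps). split; [lra|]. split.
    + destruct (Hmod (r+1) eps ltac:(lra) He) as [[H _] _]. exact H.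
    + intros R HR. apply (Hmon eps He R (r+1)); lra.
  - destruct (Hmod r eps Hr He) as [[Hp _] _].
    destruct (Hlsc eps He r Hr (delta r eps / 2) ltac:(lra)) as [h [Hh Hs]].
    exists (h/2), (delta r eps / 2). split; [lra|]. split; [lra|].
    intros R HR. specialize (Hs R ltac:(lra)). lra.
Qed.

Lemma uc_step {X} (d:X->X->R) delta : modulus_uc d delta ->
  (modulus_monotone delta \/ modulus_lsc_right delta) -> UCP d.
Proof.
  intros Hmod Hml r0 Dd Hr HD HD2.
  set (eps := Dd / (r0 + 1)).
  assert (E : eps * (r0+1) = Dd) by (unfold eps; field; lra).
  assert (Heps0 : 0 < eps) by (unfold eps; apply Rdiv_lt_0_compat; lra).
  assert (Heps : 0 < eps <= 2) by (split; nra).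
  destruct (DL d delta Hmod Hml r0 eps Hr Heps) as [h [d0 [Hh [Hd0 Hdl]]]].
  assert (Hdr : 0 < d0 * r0) by (apply Rmult_lt_0_compat; lra).
  set (t := Rmin h (Rmin 1 (d0 * r0 / 2))).
  assert (Ht1 : t <= h) by (unfold t; apply Rmin_l).
  assert (Ht2 : t <= 1) by (unfold t; eapply Rle_trans; [apply Rmin_r| apply Rmin_l]).
  assert (Ht3 : t <= d0*r0/2) by (unfold t; eapply Rle_trans; [apply Rmin_r| apply Rmin_r]).
  assert (Ht0 : 0 < t) by (unfold t; repeat apply Rmin_glb_lt; lra).
  exists (r0 + t), ((1 - d0) * (r0 + t)). split; [lra|]. split; [nra|].
  intros a x y m Hx Hy Hxy Hmid.
  destruct (Hmod (r0+t) eps ltac:(lra) Heps) as [_ Huc].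
  assert (Hd : d0 <= delta (r0+t) eps) by (apply Hdl; lra).
  assert (Hxy' : d x y >= eps * (r0+t)) by nra.
  pose proof (Huc a x y m Hx Hy Hxy' Hmid). nra.
Qed.

Lemma nested_le {X} (C : nat -> X -> Prop) : (forall k x, C (S k) x -> C k x) ->
  forall k j x, (k <= j)%nat -> C j x -> C k x.
Proof. intros H k j x Hkj. induction Hkj; auto. Qed.

Lemma IL {X} (d:X->X->R) : is_metric d -> complete_metric d -> geodesic_space d -> UCP d ->
  forall C : nat -> X -> Prop,
  (forall k x, C (S k) x -> C k x) -> (forall k, exists x, C k x) ->
  (forall k, seq_closed_set d (C k)) -> (forall k, geod_convex d (C k)) ->
  metric_bounded d (C O) -> exists x, forall k, C k x.
Proof.
  intros Hm Hc Hg Hu C Hn Hne Hcl Hcv [p [rb Hbd]].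
  set (E := fun s => exists k, forall x, C k x -> s <= d p x).
  assert (HEb : bound E).
  { exists rb. intros s [k Hk]. destruct (Hne k) as [x Hx]. specialize (Hk x Hx).
    pose proof (Hbd x (nested_le C Hn 0 k x (Nat.le_0_l k) Hx)) as H.
    rewrite (m_sym d Hm) in H. lra. }
  assert (HE0 : E 0). { exists O. intros x _. apply (m_pos d Hm). }
  destruct (completeness E HEb (ex_intro _ 0 HE0)) as [r [Hr1 Hr2]].
  assert (Hr0 : 0 <= r) by (apply Hr1; exact HE0).
  assert (Hi : forall k, exists x, C k x /\ d p x < r + / (INR k + 1)).
  { intros k. apply NNPP. intro Hno.
    assert (H : E (r + /(INR k + 1))).
    { exists k. intros x Hx. apply Rnot_lt_le. intro Hlt. apply Hno. exists x. auto. }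
    apply Hr1 in H. pose proof (inv_pos k). lra. }
  assert (Hii : forall s', s' < r -> exists K, forall x, C K x -> s' < d p x).
  { intros s' Hs'. apply NNPP. intro Hno.
    assert (H : is_upper_bound E s').
    { intros s [k Hk].
      destruct (not_all_ex_not X (fun x => C k x -> s' < d p x) (fun H => Hno (ex_intro _ k H))) as [x Hx].
      apply imply_to_and in Hx. destruct Hx as [Hx1 Hx2]. specialize (Hk x Hx1).
      apply Rnot_lt_le in Hx2. lra. }
    apply Hr2 in H. lra. }
  pose (xs := fun k => proj1_sig (constructive_indefinite_description _ (Hi k))).
  assert (Hxs : forall k, C k (xs k) /\ d p (xs k) < r + /(INR k + 1)).
  { intro k. unfold xs. exact (proj2_sig (constructive_indefinite_description _ (Hi k))). }
  assert (Hcau : cauchy_seq d xs).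
  { intros eps Heps.
    destruct (Rle_lt_dec eps (2*r)) as [Hle|Hlt].
    - assert (Hrp : 0 < r) by lra.
      destruct (Hu r eps Hrp Heps Hle) as [R [s' [HR [Hs' Huc]]]].
      destruct (Hii s' Hs') as [K HK].
      destruct (small_inv (R - r) ltac:(lra)) as [N1 HN1].
      set (N := Nat.max K N1).
      exists N. intros j k Hj Hk.
      apply Rnot_le_lt. intro Hge.
      assert (Cj : C N (xs j)) by (apply (nested_le C Hn N j); [auto | apply Hxs]).
      assert (Ck : C N (xs k)) by (apply (nested_le C Hn N k); [auto | apply Hxs]).
      destruct (mid_exists d (C N) Hm Hg (Hcv N) _ _ Cj Ck) as [m [Cm Hmid]].
      pose proof (HN1 N (Nat.le_max_r K N1)) as HNN.
      assert (Hmp : d m p <= s').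
      { apply (Huc p (xs j) (xs k) m); auto.
        - rewrite (m_sym d Hm). pose proof (Hxs j). pose proof (inv_mono N j Hj). lra.
        - rewrite (m_sym d Hm). pose proof (Hxs k). pose proof (inv_mono N k Hk). lra. }
      assert (HCK : C K m) by (apply (nested_le C Hn K N); [apply Nat.le_max_l| auto]).
      specialize (HK m HCK). rewrite (m_sym d Hm) in HK. lra.
    - destruct (small_inv ((eps - 2*r)/2) ltac:(lra)) as [N HN]. exists N. intros j k Hj Hk.
      pose proof (m_tri d Hm (xs j) p (xs k)). rewrite (m_sym d Hm (xs j) p) in H.
      pose proof (Hxs j). pose proof (Hxs k). pose proof (inv_mono N j Hj).
      pose proof (inv_mono N k Hk). specialize (HN N (le_n N)). lra. }
  destruct (Hc xs Hcau) as [x Hx]. exists x. intro k.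
  apply (Hcl k (fun n => xs (n + k)%nat) x).
  - intros n. apply (nested_le C Hn k (n+k)); [lia| apply Hxs].
  - intros e He. destruct (Hx e He) as [N HN]. exists N. intros n Hn0. apply HN. lia.
Qed.

Lemma NEAR {X} (d:X->X->R) : is_metric d -> complete_metric d -> geodesic_space d ->
  busemann_convex d -> UCP d ->
  forall (K0 : X -> Prop) q D, seq_closed_set d K0 -> geod_convex d K0 ->
  (forall eta, 0 < eta -> exists s, K0 s /\ d q s <= D + eta) -> exists s, K0 s /\ d q s <= D.
Proof.
  intros Hm Hc Hg Hb Hu K0 q D Hcl Hcv Hap.
  destruct (IL d Hm Hc Hg Hu (fun k s => K0 s /\ d q s <= D + /(INR k + 1))) as [s Hs].
  - intros k x [H1 H2]. split; auto. pose proof (inv_mono k (S k) (Nat.le_succ_diag_r k)). lra.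
  - intros k. destruct (Hap (/(INR k+1)) (inv_pos k)) as [s [H1 H2]]. exists s; auto.
  - intros k u x Hu' Hux. split.
    + apply (Hcl u x); [intro n; apply Hu'| auto].
    + apply le_epsilon. intros e He. destruct (Hux e He) as [N HN]. specialize (HN N (le_n N)).
      destruct (Hu' N) as [_ H2]. pose proof (m_tri d Hm q (u N) x). lra.
  - intros k c l Hcg [H01 H02] [Hl1 Hl2] t Ht. split.
    + apply (Hcv c l Hcg H01 Hl1 t Ht).
    + rewrite (m_sym d Hm). apply (ball_convex d Hm Hb c l q _ t Hcg Ht); rewrite (m_sym d Hm); auto.
  - exists q, (D+1). intros x [_ H]. rewrite (m_sym d Hm).
    change (INR 0) with 0 in H. rewrite Rplus_0_l, Rinv_1 in H. exact H.
  - exists s. split; [apply (Hs O)|]. apply le_epsilon. intros e He.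
    destruct (small_inv e He) as [N HN]. destruct (Hs N) as [_ H]. specialize (HN N (le_n N)). lra.
Qed.

Definition LSd {X} (d:X->X->R) (u:nat->X) (w:X) (s:R) : Prop :=
  forall e, 0 < e -> exists N, forall n, (N <= n)%nat -> d (u n) w <= s + e.

Lemma UL {X} (d:X->X->R) : is_metric d -> geodesic_space d -> UCP d ->
  forall (K0 : X -> Prop) u r0, geod_convex d K0 ->
  (forall w s, K0 w -> LSd d u w s -> r0 <= s) ->
  forall w1 w2, K0 w1 -> K0 w2 -> LSd d u w1 r0 -> LSd d u w2 r0 -> w1 = w2.
Proof.
  intros Hm Hg Hu K0 u r0 Hcv Hmin w1 w2 H1 H2 L1 L2.
  destruct (Req_dec (d w1 w2) 0) as [E|E]; [apply (m_eq d Hm); auto|].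
  exfalso.
  assert (Hpos : 0 < d w1 w2) by (pose proof (m_pos d Hm w1 w2); lra).
  assert (Hle : d w1 w2 <= 2 * r0).
  { apply le_epsilon. intros e He. destruct (L1 (e/2) ltac:(lra)) as [N1 HN1].
    destruct (L2 (e/2) ltac:(lra)) as [N2 HN2].
    specialize (HN1 (Nat.max N1 N2) (Nat.le_max_l _ _)).
    specialize (HN2 (Nat.max N1 N2) (Nat.le_max_r _ _)).
    pose proof (m_tri d Hm w1 (u (Nat.max N1 N2)) w2) as H. rewrite (m_sym d Hm w1 (u _)) in H. lra. }
  assert (Hr : 0 < r0) by lra.
  destruct (Hu r0 (d w1 w2) Hr Hpos Hle) as [R [s' [HR [Hs' Huc]]]].
  destruct (mid_exists d K0 Hm Hg Hcv w1 w2 H1 H2) as [m [Hm' Hmid]].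
  assert (H : LSd d u m s').
  { intros e He. destruct (L1 (R - r0) ltac:(lra)) as [N1 HN1].
    destruct (L2 (R-r0) ltac:(lra)) as [N2 HN2].
    exists (Nat.max N1 N2). intros n Hn. rewrite (m_sym d Hm).
    specialize (HN1 n (Nat.le_trans _ _ _ (Nat.le_max_l N1 N2) Hn)).
    specialize (HN2 n (Nat.le_trans _ _ _ (Nat.le_max_r N1 N2) Hn)).
    rewrite (m_sym d Hm) in HN1, HN2.
    assert (d m (u n) <= s').
    { refine (Huc (u n) w1 w2 m _ _ (Rle_refl _) Hmid); lra. }
    lra. }
  pose proof (Hmin m s' Hm' H). lra.
Qed.

Lemma LS_mono {X} (d:X->X->R) u w s s' : s <= s' -> LSd d u w s -> LSd d u w s'.
Proof. intros Hs H e He. destruct (H e He) as [N HN]. exists N. intros n Hn. specialize (HN n Hn). lra. Qed.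

Lemma LS_lim {X} (d:X->X->R) u w r : (forall k, LSd d u w (r + /(INR k + 1))) -> LSd d u w r.
Proof. intros H e He. destruct (small_inv (e/2) ltac:(lra)) as [K HK].
  destruct (H K (e/2) ltac:(lra)) as [N HN]. exists N. intros n Hn. specialize (HN n Hn).
  specialize (HK K (le_n K)). lra. Qed.

Lemma LS_closed {X} (d:X->X->R) (y:nat->X) : is_metric d -> forall s, seq_closed_set d (fun w => LSd d y w s).
Proof. intros Hm s u w Hu Huw e He. destruct (Huw (e/2) ltac:(lra)) as [J HJ].
  specialize (HJ J (le_n J)). destruct (Hu J (e/2) ltac:(lra)) as [N HN]. exists N. intros n Hn.
  specialize (HN n Hn). pose proof (m_tri d Hm (y n) (u J) w). lra. Qed.

Lemma LS_convex {X} (d:X->X->R) (y:nat->X) : is_metric d -> busemann_convex d ->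
  forall s, geod_convex d (fun w => LSd d y w s).
Proof. intros Hm Hb s c l Hc H0 H1 t Ht e He.
  destruct (H0 e He) as [N1 HN1]. destruct (H1 e He) as [N2 HN2].
  exists (Nat.max N1 N2). intros n Hn.
  specialize (HN1 n (Nat.le_trans _ _ _ (Nat.le_max_l N1 N2) Hn)).
  specialize (HN2 n (Nat.le_trans _ _ _ (Nat.le_max_r N1 N2) Hn)).
  rewrite (m_sym d Hm) in *. apply (ball_convex d Hm Hb c l (y n) _ t Hc Ht); auto.
Qed.

Lemma inf_exists (E : R -> Prop) : (exists x, E x) -> (exists m, forall x, E x -> m <= x) ->
  exists r, is_inf_of E r.
Proof.
  intros [x0 Hx0] [m Hm].
  destruct (completeness (fun y => E (- y))) as [l [Hl1 Hl2]].
  - exists (-m). intros y Hy. specialize (Hm _ Hy). lra.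
  - exists (-x0). rewrite Ropp_involutive. exact Hx0.
  - exists (-l). split.
    + intros r Hr. assert (-r <= l) by (apply Hl1; rewrite Ropp_involutive; exact Hr). lra.
    + intros b Hb. assert (l <= -b). { apply Hl2. intros y Hy. specialize (Hb _ Hy). lra. } lra.
Qed.

Theorem mainTheorem6 (X : Type) (d : X -> X -> R) (A B : X -> Prop) (T : X -> X) :
  is_metric d -> complete_metric d -> geodesic_space d -> busemann_convex d ->
  (exists delta, modulus_uc d delta /\
     (modulus_monotone delta \/ modulus_lsc_right delta)) ->
  (exists a, A a) -> (exists b, B b) ->
  seq_closed_set d A -> seq_closed_set d B -> geod_convex d A -> geod_convex d B ->
  metric_bounded d B ->
  noncyclic A B T -> relatively_nonexpansive d A B T ->
  exists x y, A x /\ B y /\ T x = x /\ T y = y /\ set_dist_is d A B (d x y).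
Proof.
  intros Hm Hc Hg Hb [delta [Hmod Hml]] [a00 Ha00] [b00 Hb00] HAc HBc HAv HBv HBb [TA TB] Hne.
  pose proof (uc_step d delta Hmod Hml) as Hu.
  destruct HBb as [x0 [rB HrB]].
  destruct (inf_exists (dist_set d A B)) as [D [HD1 HD2]].
  { exists (d a00 b00). exists a00, b00. auto. }
  { exists 0. intros r [a [b [_ [_ ->]]]]. apply (m_pos d Hm). }
  assert (Dlow : forall a b, A a -> B b -> D <= d a b).
  { intros a b Ha Hb'. apply HD1. exists a, b. auto. }
  assert (Dapp : forall e, 0 < e -> exists a b, A a /\ B b /\ d a b < D + e).
  { intros e He. apply NNPP. intro Hno. assert (D + e <= D); [|lra]. apply HD2.
    intros r [a [b [Ha [Hb' ->]]]]. apply Rnot_lt_le. intro Hlt. apply Hno. exists a, b. auto. }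
  destruct (IL d Hm Hc Hg Hu (fun k b => B b /\ forall e, 0 < e ->
            exists a, A a /\ d a b <= D + /(INR k + 1) + e)) as [b1 Hb1].
  - intros k x [H1 H2]. split; auto. intros e He. destruct (H2 e He) as [a [Ha Hd]].
    exists a. split; auto. pose proof (inv_mono k (S k) (Nat.le_succ_diag_r k)). lra.
  - intros k. destruct (Dapp (/(INR k+1)) (inv_pos k)) as [a [b [Ha [Hb' Hd]]]].
    exists b. split; auto. intros e He. exists a. split; auto. lra.
  - intros k u x Hu' Hux. split.
    + apply (HBc u x); [intro n; apply Hu' | auto].
    + intros e He. destruct (Hux (e/2) ltac:(lra)) as [N HN]. specialize (HN N (le_n N)).
      destruct (Hu' N) as [_ H2]. destruct (H2 (e/2) ltac:(lra)) as [a [Ha Hd]].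
      exists a. split; auto. pose proof (m_tri d Hm a (u N) x). lra.
  - intros k c l Hcg [H01 H02] [Hl1 Hl2] t Ht. split.
    + apply (HBv c l Hcg H01 Hl1 t Ht).
    + intros e He. destruct (H02 e He) as [a1 [Ha1 Hd1]]. destruct (Hl2 e He) as [a2 [Ha2 Hd2]].
      destruct (Hg a1 a2) as [g [Hgg [Hg0 Hg1]]].
      destruct (pair_convex d Hm Hb c l g (d a1 a2) (D + /(INR k+1) + e) t Hcg Hgg Ht)
        as [t' [Ht' Hdt]].
      * rewrite Hg0. auto.
      * rewrite Hg1. auto.
      * exists (g t'). split; auto. apply (HAv g (d a1 a2) Hgg); [rewrite Hg0|rewrite Hg1|]; auto.
  - exists x0, rB. intros x [Hx _]. auto.
  - assert (HB1 : B b1) by apply (Hb1 O).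
    destruct (NEAR d Hm Hc Hg Hb Hu A b1 D HAc HAv) as [a1 [Ha1 Hd1]].
    { intros eta Heta. destruct (small_inv (eta/2) ltac:(lra)) as [N HN].
      destruct (Hb1 N) as [_ H]. destruct (H (eta/2) ltac:(lra)) as [a [Ha Hd]].
      exists a. split; auto. rewrite (m_sym d Hm). specialize (HN N (le_n N)). lra. }
    pose (A0 := fun a => A a /\ exists b, B b /\ d a b <= D).
    assert (A0a1 : A0 a1).
    { split; auto. exists b1. split; auto. rewrite (m_sym d Hm); auto. }
    assert (A0T : forall a, A0 a -> A0 (T a)).
    { intros a [Ha [b [Hb' Hd]]]. split; auto. exists (T b). split; auto.
      pose proof (Hne a b Ha Hb'). lra. }
    assert (A0cl : seq_closed_set d A0).
    { intros u x Hu' Hux. assert (Hx : A x) by (apply (HAc u x); [intro n; apply Hu'| auto]).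
      split; auto.
      apply (NEAR d Hm Hc Hg Hb Hu B x D HBc HBv).
      intros eta Heta. destruct (Hux eta Heta) as [N HN]. specialize (HN N (le_n N)).
      destruct (Hu' N) as [_ [b [Hb' Hd]]]. exists b. split; auto.
      pose proof (m_tri d Hm x (u N) b) as H. rewrite (m_sym d Hm x (u N)) in H. lra. }
    assert (A0cv : geod_convex d A0).
    { intros c l Hcg [H01 [b1' [Hb1' Hd1']]] [Hl1 [b2' [Hb2' Hd2']]] t Ht.
      split. apply (HAv c l Hcg H01 Hl1 t Ht).
      destruct (Hg b1' b2') as [g [Hgg [Hg0 Hg1]]].
      destruct (pair_convex d Hm Hb c l g (d b1' b2') D t Hcg Hgg Ht) as [t' [Ht' Hdt]].
      - rewrite Hg0, (m_sym d Hm). auto.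
      - rewrite Hg1, (m_sym d Hm). auto.
      - exists (g t'). split. apply (HBv g (d b1' b2') Hgg); [rewrite Hg0 | rewrite Hg1 | ]; auto.
        rewrite (m_sym d Hm); auto. }
    pose (y := fun n => Nat.iter n T b1).
    assert (HyS : forall n, y (S n) = T (y n)) by reflexivity.
    assert (Hy : forall n, B (y n)).
    { induction n as [|n IH]; [exact HB1| rewrite HyS; apply TB; auto]. }
    destruct (inf_exists (fun s => exists w, A0 w /\ LSd d y w s)) as [r0 [Hr1 Hr2]].
    { exists (D + 2*rB). exists a1. split; auto. intros e He. exists O. intros n _.
      pose proof (m_tri d Hm (y n) x0 a1). pose proof (m_tri d Hm x0 b1 a1).
      pose proof (HrB _ (Hy n)). pose proof (HrB _ HB1).
      pose proof (m_sym d Hm x0 b1). pose proof (m_sym d Hm b1 a1). lra. }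
    { exists 0. intros s [w [_ Hw]]. apply le_epsilon. intros e He.
      destruct (Hw e He) as [N HN]. specialize (HN N (le_n N)).
      pose proof (m_pos d Hm (y N) w). lra. }
    destruct (IL d Hm Hc Hg Hu (fun k w => A0 w /\ LSd d y w (r0 + /(INR k + 1)))) as [w Hw].
    + intros k x [H1 H2]. split; auto. apply (LS_mono d y x _ _ (Rplus_le_compat_l _ _ _
        (inv_mono k (S k) (Nat.le_succ_diag_r k))) H2).
    + intros k. apply NNPP. intro Hno. assert (r0 + /(INR k+1) <= r0).
      { apply Hr2. intros s [w [Hw Hls]]. apply Rnot_lt_le. intro Hlt. apply Hno. exists w.
        split; auto. apply (LS_mono d y w s); auto; lra. }
      pose proof (inv_pos k). lra.
    + intros k u x Hu' Hux. split.
      * apply (A0cl u x); [intro n; apply Hu'| auto].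
      * apply (LS_closed d y Hm _ u x); [intro n; apply Hu' | auto].
    + intros k c l Hcg [H01 H02] [Hl1 Hl2] t Ht. split.
      * apply (A0cv c l Hcg H01 Hl1 t Ht).
      * apply (LS_convex d y Hm Hb _ c l Hcg H02 Hl2 t Ht).
    + exists x0, (r0 + 2 + rB). intros x [_ H]. destruct (H 1 ltac:(lra)) as [N HN].
      specialize (HN N (le_n N)). change (INR 0) with 0 in HN. rewrite Rplus_0_l, Rinv_1 in HN.
      pose proof (m_tri d Hm x (y N) x0). pose proof (HrB _ (Hy N)).
      pose proof (m_sym d Hm x (y N)). lra.
    + assert (HA0w : A0 w) by apply (Hw O).
      assert (HLw : LSd d y w r0) by (apply LS_lim; intro k; apply (Hw k)).
      assert (HLTw : LSd d y (T w) r0).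
      { intros e He. destruct (HLw e He) as [N HN]. exists (S N). intros n Hn.
        destruct n as [|m]; [lia|]. rewrite HyS. specialize (HN m ltac:(lia)).
        destruct HA0w as [HAw _]. pose proof (Hne w (y m) HAw (Hy m)).
        rewrite (m_sym d Hm (T (y m))). rewrite (m_sym d Hm w) in *. lra. }
      assert (HTw : w = T w).
      { apply (UL d Hm Hg Hu A0 y r0 A0cv); auto.
        intros w' s Hw' Hls. apply Hr1. exists w'. auto. }
      destruct HA0w as [HAw [b [HBb Hdb]]].
      assert (HTb : b = T b).
      { apply (UL d Hm Hg Hu B (fun _ => w) D HBv).
        - intros b' s Hb' Hls. apply le_epsilon. intros e He. destruct (Hls e He) as [N HN].
          specialize (HN N (le_n N)). pose proof (Dlow w b' HAw Hb'). lra.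
        - auto.
        - apply TB; auto.
        - intros e He. exists O. intros n _. lra.
        - intros e He. exists O. intros n _. pose proof (Hne w b HAw HBb). rewrite <- HTw in H. lra. }
      exists w, b. split; auto. split; auto. split; [auto|]. split; [auto|].
      assert (E : d w b = D) by (pose proof (Dlow w b HAw HBb); lra).
      rewrite E. split; auto.
Qed.
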